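(* Let $N\ge 1$, $a_1,\dots,a_N>0$, $T_1,\dots,T_N\ge 0$, $P_{\mathrm{tot}}>0$, $c=\ln 2$, $\bar P_i=(2^{T_i}-1)/a_i$, and for $\lambda>0$ let $P_i(\lambda)=\frac{2}{\lambda c^2}W_0\!\left(\frac{\lambda c^2}{2a_i}2^{T_i}\right)-\frac1{a_i}$, $P_i^*(\lambda)=\min\{\bar P_i,\max\{0,P_i(\lambda)\}\}$ and $S(\lambda)=\sum_i P_i^*(\lambda)$, where $W_0$ is the principal branch of the Lambert W function. Consider the following algorithm with tolerance $\varepsilon>0$: if $P_{\mathrm{tot}}\ge\sum_i\bar P_i$, return $P_i=\bar P_i$; otherwise set $\lambda_{\mathrm{lo}}=0$, $\lambda_{\mathrm{hi}}=1$, and while $S(\lambda_{\mathrm{hi}})>P_{\mathrm{tot}}$ replace $\lambda_{\mathrm{hi}}$ by $2\lambda_{\mathrm{hi}}$; then repeat: set $\lambda=(\lambda_{\mathrm{lo}}+\lambda_{\mathrm{hi}})/2$, compute $P_i^*(\lambda)$ for all $i$ and $S(\lambda)$, set $\lambda_{\mathrm{lo}}=\lambda$ if $S(\lambda)>P_{\mathrm{tot}}$ and $\lambda_{\mathrm{hi}}=\lambda$ otherwise, until $|S(\lambda)-P_{\mathrm{tot}}|<\varepsilon$; return $(P_i^*(\lambda))_i$ and $\lambda$. Suppose $P_{\mathrm{tot}}<\sum_i\bar P_i$ and at least one channel has $a_i,T_i>0$. Then, for fixed problem data, the algorithm terminates after at most $O(\log(1/\varepsilon))$ bisection iterations; each iteration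 requires $N$ Lambert W evaluations and $O(N)$ elementary operations, for a total complexity of $O(N\log(1/\varepsilon))$.
   Context: For $z\ge 0$, $W_0(z)$ is the unique $w\ge 0$ with $we^w=z$; a Lambert W evaluation is counted as a unit-cost operation. *)

(* Defs.v *)
From Stdlib Require Import Reals Lra Lia ClassicalEpsilon.
Open Scope R_scope.

(* Principal branch of Lambert W on z >= 0: the unique w >= 0 with w e^w = z.
   (Arbitrary value elsewhere; only used at z > 0.) *)
Definition W0 (z : R) : R :=
  epsilon (inhabits 0) (fun w => 0 <= w /\ w * exp w = z).

Definition c : R := ln 2.

Definition Pbar (a T : R) : R := (Rpower 2 T - 1) / a.

Definition Plam (a T lam : R) : R :=
  2 / (lam * c ^ 2) * W0 (lam * c ^ 2 / (2 * a) * Rpower 2 T) - 1 / a.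

Definition Pstar (a T lam : R) : R := Rmin (Pbar a T) (Rmax 0 (Plam a T lam)).

Fixpoint sumN (f : nat -> R) (n : nat) : R :=
  match n with
  | O => 0
  | S n' => sumN f n' + f n'
  end.

Definition Ssum (N : nat) (a T : nat -> R) (lam : R) : R :=
  sumN (fun i => Pstar (a i) (T i) lam) N.

Fixpoint bis (Sf : R -> R) (Ptot hi0 : R) (k : nat) : R * R :=
  match k with
  | O => (0, hi0)
  | S k' =>
      let '(lo, hi) := bis Sf Ptot hi0 k' in
      let lam := (lo + hi) / 2 in
      if Rlt_dec Ptot (Sf lam) then (lam, hi) else (lo, lam)
  end.

(* The lambda computed in bisection iteration number k+1 (k = 0,1,...). *)
Definition bis_mid (Sf : R -> R) (Ptot hi0 : R) (k : nat) : R :=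
  (fst (bis Sf Ptot hi0 k) + snd (bis Sf Ptot hi0 k)) / 2.

(* Main.v *)
Require Import Defs.
From Stdlib Require Import Reals Lra Lia ZArith ClassicalEpsilon Classical.
Open Scope R_scope.

Lemma exp_le_inc x y : x <= y -> exp x <= exp y.
Proof. intros [H|H]; [left; apply exp_increasing; auto| subst; lra]. Qed.

Lemma W0_spec z : 0 <= z -> 0 <= W0 z /\ W0 z * exp (W0 z) = z.
Proof.
  intros Hz. unfold W0. apply epsilon_spec.
  destruct (Req_dec z 0) as [E|E].
  - exists 0. subst. split; [lra| ring].
  - assert (Hz' : 0 < z) by lra.
    assert (He : 1 < exp z).
    { pose proof (exp_ineq1_le z). lra. }
    destruct (IVT (fun w => w * exp w - z) 0 z) as [w [[H1 H2] H3]].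
    + apply continuity_minus.
      * apply continuity_mult.
        -- apply derivable_continuous, derivable_id.
        -- apply derivable_continuous, derivable_exp.
      * apply continuity_const. intros ? ?. reflexivity.
    + lra.
    + simpl. rewrite exp_0. lra.
    + simpl. nra.
    + exists w. split; [lra|]. simpl in H3. lra.
Qed.

Lemma W0_0 : W0 0 = 0.
Proof.
  destruct (W0_spec 0 (Rle_refl 0)) as [H1 H2].
  pose proof (exp_pos (W0 0)). nra.
Qed.

Lemma expW_lip_aux x y : 0 <= x -> 0 <= y -> W0 x <= W0 y ->
  Rabs (exp (- W0 x) - exp (- W0 y)) <= Rabs (x - y).
Proof.
  intros Hx Hy Hw.
  destruct (W0_spec x Hx) as [A1 A2]. destruct (W0_spec y Hy) as [B1 B2].
  set (w1 := W0 x) in *. set (w2 := W0 y) in *.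
  assert (E1 : exp w1 <= exp w2) by (apply exp_le_inc; lra).
  assert (E0 : 1 <= exp w1) by (pose proof (exp_ineq1_le w1); lra).
  assert (Hyx : w2 - w1 <= y - x) by nra.
  assert (Hd : exp (- w2) = exp (- w1) * exp (- (w2 - w1))) by (rewrite <- exp_plus; f_equal; ring).
  pose proof (exp_ineq1_le (- (w2 - w1))).
  assert (Hm : exp (- w1) <= 1) by (rewrite <- exp_0; apply exp_le_inc; lra).
  assert (Hp : 0 < exp (- w1)) by apply exp_pos.
  assert (Hq : exp (- w2) <= exp (- w1)) by (apply exp_le_inc; lra).
  rewrite Rabs_pos_eq by lra. rewrite Rabs_minus_sym, Rabs_pos_eq by lra.
  nra.
Qed.

Lemma expW_lip x y : 0 <= x -> 0 <= y ->
  Rabs (exp (- W0 x) - exp (- W0 y)) <= Rabs (x - y).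
Proof.
  intros Hx Hy. destruct (Rle_lt_dec (W0 x) (W0 y)).
  - apply expW_lip_aux; auto.
  - rewrite Rabs_minus_sym, (Rabs_minus_sym x). apply expW_lip_aux; auto; lra.
Qed.

Lemma c_pos : 0 < c.
Proof. unfold c. rewrite <- ln_1. apply ln_increasing; lra. Qed.

Lemma R2_pos T : 0 < Rpower 2 T.
Proof. unfold Rpower. apply exp_pos. Qed.

Lemma R2_ge1 T : 0 <= T -> 1 <= Rpower 2 T.
Proof. intros. unfold Rpower. rewrite <- exp_0. apply exp_le_inc.
  pose proof c_pos. unfold c in *. nra. Qed.

Definition kk (a T : R) : R := c ^ 2 / (2 * a) * Rpower 2 T.
Definition gg (a T lam : R) : R := Rpower 2 T / a * exp (- W0 (lam * kk a T)) - 1 / a.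
Definition ff (a T lam : R) : R := Rmin (Pbar a T) (Rmax 0 (gg a T lam)).
Definition LL (a T : R) : R := Rpower 2 T / a * kk a T.

Lemma kk_pos a T : 0 < a -> 0 < kk a T.
Proof. intros. unfold kk. pose proof c_pos. pose proof (R2_pos T).
  apply Rmult_lt_0_compat; [|auto]. apply Rdiv_lt_0_compat; [nra|lra]. Qed.

Lemma Plam_gg a T lam : 0 < a -> 0 < lam -> Plam a T lam = gg a T lam.
Proof.
  intros Ha Hl. pose proof c_pos. pose proof (kk_pos a T Ha).
  assert (Hz : 0 <= lam * kk a T) by nra.
  destruct (W0_spec _ Hz) as [H1 H2].
  unfold Plam, gg.
  replace (lam * c ^ 2 / (2 * a) * Rpower 2 T) with (lam * kk a T) by (unfold kk; field; lra).
  set (w := W0 (lam * kk a T)) in *.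
  assert (Hw : w = lam * kk a T * exp (- w)).
  { rewrite <- H2, Rmult_assoc, <- exp_plus. replace (w + - w) with 0 by ring. rewrite exp_0. ring. }
  rewrite Hw at 1. unfold kk. field; repeat split; lra.
Qed.

Lemma Pstar_ff a T lam : 0 < a -> 0 < lam -> Pstar a T lam = ff a T lam.
Proof. intros. unfold Pstar, ff. rewrite Plam_gg; auto. Qed.

Lemma Pbar_nonneg a T : 0 < a -> 0 <= T -> 0 <= Pbar a T.
Proof. intros. unfold Pbar. pose proof (R2_ge1 T H0). unfold Rdiv; apply Rmult_le_pos; [lra| left; apply Rinv_0_lt_compat; lra]. Qed.

Lemma ff_0 a T : 0 < a -> 0 <= T -> ff a T 0 = Pbar a T.
Proof.
  intros Ha HT. unfold ff, gg. rewrite Rmult_0_l, W0_0, Ropp_0, exp_0.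
  pose proof (Pbar_nonneg a T Ha HT).
  replace (Rpower 2 T / a * 1 - 1 / a) with (Pbar a T) by (unfold Pbar; field; lra).
  unfold Rmin, Rmax. repeat destruct Rle_dec; lra.
Qed.

Lemma minmax_lip p u v : Rabs (Rmin p (Rmax 0 u) - Rmin p (Rmax 0 v)) <= Rabs (u - v).
Proof. unfold Rmin, Rmax, Rabs. repeat destruct Rle_dec; repeat destruct Rcase_abs; lra. Qed.

Lemma ff_lip a T x y : 0 < a -> 0 <= x -> 0 <= y ->
  Rabs (ff a T x - ff a T y) <= LL a T * Rabs (x - y).
Proof.
  intros Ha Hx Hy. unfold ff. eapply Rle_trans; [apply minmax_lip|].
  unfold gg, LL. pose proof (kk_pos a T Ha). pose proof (R2_pos T).
  replace (Rpower 2 T / a * exp (- W0 (x * kk a T)) - 1 / a -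
     (Rpower 2 T / a * exp (- W0 (y * kk a T)) - 1 / a)) with
    (Rpower 2 T / a * (exp (- W0 (x * kk a T)) - exp (- W0 (y * kk a T)))) by ring.
  rewrite Rabs_mult, Rabs_pos_eq by (apply Rlt_le, Rdiv_lt_0_compat; lra).
  rewrite Rmult_assoc. apply Rmult_le_compat_l; [apply Rlt_le, Rdiv_lt_0_compat; lra|].
  eapply Rle_trans; [apply expW_lip; nra|].
  replace (x * kk a T - y * kk a T) with (kk a T * (x - y)) by ring.
  rewrite Rabs_mult, Rabs_pos_eq by lra. lra.
Qed.

Lemma sumN_ext f g n : (forall i, (i < n)%nat -> f i = g i) -> sumN f n = sumN g n.
Proof. induction n; simpl; intros H; auto. rewrite IHn by (intros; apply H; lia). rewrite H by lia. auto. Qed.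

Lemma sumN_le f g n : (forall i, (i < n)%nat -> f i <= g i) -> sumN f n <= sumN g n.
Proof. induction n; simpl; intros H; [lra|]. pose proof (H n ltac:(lia)). assert (sumN f n <= sumN g n) by (apply IHn; intros; apply H; lia). lra. Qed.

Lemma sumN_nonneg f n : (forall i, (i < n)%nat -> 0 <= f i) -> 0 <= sumN f n.
Proof. induction n; simpl; intros H; [lra|]. pose proof (H n ltac:(lia)). assert (0 <= sumN f n) by (apply IHn; intros; apply H; lia). lra. Qed.

Lemma sumN_ge_term f n i : (forall j, (j < n)%nat -> 0 <= f j) -> (i < n)%nat -> f i <= sumN f n.
Proof. induction n; simpl; intros H Hi; [lia|].
  assert (0 <= sumN f n) by (apply sumN_nonneg; intros; apply H; lia).
  destruct (Nat.eq_dec i n). subst. lra. assert (f i <= sumN f n) by (apply IHn; [intros; apply H; lia|lia]).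
  pose proof (H n ltac:(lia)). lra. Qed.

Lemma sumN_lip f g L n d : (forall i, (i < n)%nat -> Rabs (f i - g i) <= L i * d) ->
  Rabs (sumN f n - sumN g n) <= sumN L n * d.
Proof. induction n; simpl; intros H.
  - rewrite Rminus_0_r, Rabs_R0. lra.
  - assert (Rabs (sumN f n - sumN g n) <= sumN L n * d) by (apply IHn; intros; apply H; lia).
    pose proof (H n ltac:(lia)).
    replace (sumN f n + f n - (sumN g n + g n)) with ((sumN f n - sumN g n) + (f n - g n)) by ring.
    eapply Rle_trans; [apply Rabs_triang|]. lra.
Qed.

Lemma min_nat (P : nat -> Prop) : (forall n, P n \/ ~ P n) ->
  forall n, P n -> exists m, P m /\ (forall j, (j < m)%nat -> ~ P j) /\ (m <= n)%nat.
Proof.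
  intros Hd n. induction n as [n IH] using (well_founded_induction lt_wf). intros Hn.
  destruct (classic (exists j, (j < n)%nat /\ P j)) as [[j [Hj Pj]]|Hno].
  - destruct (IH j Hj Pj) as [m [Pm [Hm Hmj]]]. exists m. repeat split; auto. lia.
  - exists n. repeat split; auto. intros j Hj Pj. apply Hno. eauto.
Qed.

Section Bis.
Variables (Ss Sf : R -> R) (Ptot H L : R).
Hypothesis HSs : forall x, 0 < x -> Ss x = Sf x.
Hypothesis HH : 0 < H.
Hypothesis HL : 0 <= L.
Hypothesis Hlip : forall x y, 0 <= x -> 0 <= y -> Rabs (Sf x - Sf y) <= L * Rabs (x - y).
Hypothesis H0 : Ptot < Sf 0.
Hypothesis HHi : Sf H <= Ptot.

Lemma bis_inv k : 0 <= fst (bis Ss Ptot H k) /\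
  snd (bis Ss Ptot H k) - fst (bis Ss Ptot H k) = H / 2 ^ k /\
  Ptot < Sf (fst (bis Ss Ptot H k)) /\ Sf (snd (bis Ss Ptot H k)) <= Ptot.
Proof.
  induction k as [|k IH]; simpl.
  - repeat split; try lra.
  - destruct (bis Ss Ptot H k) as [lo hi]. simpl in IH. destruct IH as [A1 [A2 [A3 A4]]].
    assert (Hp : 0 < 2 ^ k) by (apply pow_lt; lra).
    assert (Hw : 0 < H / 2 ^ k) by (apply Rdiv_lt_0_compat; lra).
    assert (Hm : 0 < (lo + hi) / 2) by lra.
    destruct (Rlt_dec Ptot (Ss ((lo + hi) / 2))) as [Hlt|Hge]; simpl.
    + rewrite HSs in Hlt by lra. repeat split; try lra.
      replace (hi - (lo + hi) / 2) with ((hi - lo) / 2) by field. rewrite A2. field. lra.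
    + rewrite HSs in Hge by lra. repeat split; try lra.
      replace ((lo + hi) / 2 - lo) with ((hi - lo) / 2) by field. rewrite A2. field. lra.
Qed.

Lemma bis_mid_bound k : Rabs (Ss (bis_mid Ss Ptot H k) - Ptot) <= L * (H / 2 ^ k).
Proof.
  unfold bis_mid. destruct (bis_inv k) as [A1 [A2 [A3 A4]]].
  destruct (bis Ss Ptot H k) as [lo hi]. simpl in *.
  assert (Hp : 0 < 2 ^ k) by (apply pow_lt; lra).
  assert (Hw : 0 < H / 2 ^ k) by (apply Rdiv_lt_0_compat; lra).
  rewrite HSs by lra.
  pose proof (Hlip ((lo + hi) / 2) lo ltac:(lra) A1) as L1.
  pose proof (Hlip ((lo + hi) / 2) hi ltac:(lra) ltac:(lra)) as L2.
  rewrite (Rabs_pos_eq ((lo + hi) / 2 - lo)) in L1 by lra. rewrite (Rabs_left1 ((lo + hi) / 2 - hi)) in L2 by lra.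
  rewrite <- A2.
  replace (L * (hi - lo)) with (L * ((lo + hi) / 2 - lo) + L * (hi - (lo + hi) / 2)) by field.
  replace (- ((lo + hi) / 2 - hi)) with (hi - (lo + hi) / 2) in L2 by field.
  assert (0 <= L * ((lo + hi) / 2 - lo)) by (apply Rmult_le_pos; lra).
  assert (0 <= L * (hi - (lo + hi) / 2)) by (apply Rmult_le_pos; lra).
  revert L1 L2. unfold Rabs. repeat destruct Rcase_abs; intros; lra.
Qed.
End Bis.

Lemma gg_neg a T lam : 0 < a -> 0 <= T -> 0 < lam ->
  T * c * exp (T * c) < lam * kk a T -> gg a T lam < 0.
Proof.
  intros Ha HT Hl Hb. pose proof (kk_pos a T Ha).
  assert (Hz : 0 <= lam * kk a T) by nra.
  destruct (W0_spec _ Hz) as [H1 H2].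
  set (w := W0 (lam * kk a T)) in *.
  assert (Hw : T * c < w).
  { destruct (Rlt_le_dec (T * c) w) as [h|h]; auto. exfalso.
    pose proof c_pos.
    assert (exp w <= exp (T * c)) by (apply exp_le_inc; auto).
    pose proof (exp_pos w). nra. }
  unfold gg. fold w. unfold Rpower. fold c.
  assert (exp (T * c) * exp (- w) < 1).
  { rewrite <- exp_plus, <- exp_0. apply exp_increasing. lra. }
  replace (exp (T * c) / a * exp (- w) - 1 / a) with ((exp (T * c) * exp (- w) - 1) / a) by (field; lra).
  apply Rdiv_neg_pos; lra.
Qed.

Lemma INR_lt_pow2 n : INR n < 2 ^ n.
Proof. induction n. simpl; lra. rewrite S_INR. simpl. pose proof (pow_R1_Rle 2 n ltac:(lra)). lra. Qed.

Lemma sumN_zero n : sumN (fun _ => 0) n = 0.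
Proof. induction n; simpl; auto. rewrite IHn; ring. Qed.

Theorem theorem3 (N : nat) (a T : nat -> R) (Ptot : R)
  (HN : (1 <= N)%nat)
  (Ha : forall i, (i < N)%nat -> 0 < a i)
  (HT : forall i, (i < N)%nat -> 0 <= T i)
  (HP : 0 < Ptot)
  (Hlt : Ptot < sumN (fun i => Pbar (a i) (T i)) N)
  (Hch : exists i, (i < N)%nat /\ 0 < a i /\ 0 < T i) :
  (exists m : nat, Ssum N a T (2 ^ m) <= Ptot /\
     forall j : nat, (j < m)%nat -> Ptot < Ssum N a T (2 ^ j)) /\
  forall m : nat,
    Ssum N a T (2 ^ m) <= Ptot ->
    (forall j : nat, (j < m)%nat -> Ptot < Ssum N a T (2 ^ j)) ->
    exists C eps0 : R, 0 < C /\ 0 < eps0 /\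
    forall eps : R, 0 < eps ->
      exists K : nat, (1 <= K)%nat /\
        Rabs (Ssum N a T (bis_mid (Ssum N a T) Ptot (2 ^ m) (K - 1)) - Ptot) < eps /\
        (forall k : nat, (k < K - 1)%nat ->
           eps <= Rabs (Ssum N a T (bis_mid (Ssum N a T) Ptot (2 ^ m) k) - Ptot)) /\
        (eps < eps0 ->
           INR K <= C * ln (1 / eps) /\
           INR (N * (m + 1 + K)) <= C * INR N * ln (1 / eps)).
Proof.
  set (Sf := fun lam => sumN (fun i => ff (a i) (T i) lam) N).
  set (Lt := sumN (fun i => LL (a i) (T i)) N).
  assert (HLt : 0 <= Lt).
  { apply sumN_nonneg; intros i Hi. unfold LL. pose proof (kk_pos (a i) (T i) (Ha i Hi)).
    pose proof (R2_pos (T i)). pose proof (Ha i Hi).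
    apply Rmult_le_pos; [|lra]. apply Rlt_le, Rdiv_lt_0_compat; lra. }
  assert (HSs : forall x, 0 < x -> Ssum N a T x = Sf x).
  { intros x Hx. unfold Ssum, Sf. apply sumN_ext. intros i Hi. apply Pstar_ff; auto. }
  assert (Hlip : forall x y, 0 <= x -> 0 <= y -> Rabs (Sf x - Sf y) <= Lt * Rabs (x - y)).
  { intros x y Hx Hy. unfold Sf, Lt. apply sumN_lip. intros i Hi. apply ff_lip; auto. }
  assert (H0 : Ptot < Sf 0).
  { unfold Sf. rewrite (sumN_ext _ (fun i => Pbar (a i) (T i))); [lra|].
    intros i Hi. apply ff_0; auto. }
  split.
  - set (B := fun i => T i * c * exp (T i * c) / kk (a i) (T i)).
    assert (HB : forall i, (i < N)%nat -> 0 <= B i).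
    { intros i Hi. unfold B. pose proof (kk_pos (a i) (T i) (Ha i Hi)). pose proof c_pos.
      pose proof (HT i Hi). pose proof (exp_pos (T i * c)).
      apply Rmult_le_pos; [|left; apply Rinv_0_lt_compat; lra].
      apply Rmult_le_pos; [|lra]. apply Rmult_le_pos; lra. }
    destruct (INR_unbounded (sumN B N)) as [n Hn].
    pose proof (INR_lt_pow2 n) as Hpow.
    assert (Hq : Ssum N a T (2 ^ n) <= Ptot).
    { unfold Ssum. apply Rle_trans with (sumN (fun _ => 0) N); [|rewrite sumN_zero; lra].
      apply sumN_le. intros i Hi.
      assert (H2 : 0 < 2 ^ n) by (apply pow_lt; lra).
      rewrite Pstar_ff by auto.
      assert (Hg : gg (a i) (T i) (2 ^ n) < 0).
      { apply gg_neg; auto. pose proof (kk_pos (a i) (T i) (Ha i Hi)).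
        pose proof (sumN_ge_term B N i HB Hi).
        assert (Hb : B i < 2 ^ n) by lra.
        unfold B in Hb.
        replace (T i * c * exp (T i * c)) with (T i * c * exp (T i * c) / kk (a i) (T i) * kk (a i) (T i)) by (field; lra).
        apply Rmult_lt_compat_r; auto. }
      unfold ff, Rmin, Rmax. repeat destruct Rle_dec; lra. }
    destruct (min_nat (fun m => Ssum N a T (2 ^ m) <= Ptot) (fun n => classic _) n Hq)
      as [m [Hm [Hj _]]].
    exists m. split; auto. intros j Hj'. apply Rnot_le_lt. apply Hj; auto.
  - intros m Hm _.
    set (H := 2 ^ m).
    assert (HH : 0 < H) by (apply pow_lt; lra).
    assert (HHi : Sf H <= Ptot) by (rewrite <- HSs; auto).
    pose proof (bis_mid_bound (Ssum N a T) Sf Ptot H Lt HSs HH HLt Hlip H0 HHi) as Hbd.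
    set (M := Lt * H + 1).
    assert (HM1 : 1 <= M) by (unfold M; pose proof (Rmult_le_pos _ _ HLt (Rlt_le _ _ HH)); lra).
    pose proof c_pos as Hc. unfold c in Hc.
    exists (2 / ln 2 + 3 + INR m), (Rmin (/ exp 1) (/ M)).
    split.
    { pose proof (pos_INR m). assert (0 < 2 / ln 2) by (apply Rdiv_lt_0_compat; lra). lra. }
    split.
    { apply Rmin_pos; apply Rinv_0_lt_compat; [apply exp_pos|lra]. }
    intros eps Heps.
    set (x := ln (M / eps) / ln 2).
    set (k0 := Z.to_nat (up x)).
    assert (Hk0x : x <= INR k0).
    { destruct (archimed x) as [U1 U2].
      destruct (Z_lt_le_dec (up x) 0) as [h|h].
      - assert (IZR (up x) <= -1) by (apply IZR_le; lia). pose proof (pos_INR k0). lra.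
      - unfold k0. rewrite INR_IZR_INZ, Z2Nat.id by auto. lra. }
    assert (Hk0 : Lt * (H / 2 ^ k0) < eps).
    { assert (Hp : M / eps <= 2 ^ k0).
      { rewrite <- (Rpower_pow k0 2) by lra. unfold Rpower.
        rewrite <- (exp_ln (M / eps)) at 1 by (apply Rdiv_lt_0_compat; lra).
        apply exp_le_inc. unfold x in Hk0x.
        replace (ln (M / eps)) with (ln (M / eps) / ln 2 * ln 2) by (field; lra).
        apply Rmult_le_compat_r; lra. }
      assert (H2 : 0 < 2 ^ k0) by (apply pow_lt; lra).
      apply (Rmult_lt_reg_r (2 ^ k0)); auto.
      replace (Lt * (H / 2 ^ k0) * 2 ^ k0) with (Lt * H) by (field; lra).
      assert (M <= eps * 2 ^ k0).
      { replace M with (eps * (M / eps)) by (field; lra). apply Rmult_le_compat_l; lra. }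
      unfold M in *. lra. }
    assert (Hex : Rabs (Ssum N a T (bis_mid (Ssum N a T) Ptot H k0) - Ptot) < eps).
    { eapply Rle_lt_trans; [apply Hbd|]. auto. }
    destruct (min_nat (fun k => Rabs (Ssum N a T (bis_mid (Ssum N a T) Ptot H k) - Ptot) < eps)
                (fun _ => classic _) k0 Hex) as [ks [Hks [Hlt' Hle]]].
    exists (S ks). replace (S ks - 1)%nat with ks by lia.
    split; [lia|]. split; [auto|]. split.
    { intros k Hk. apply Rnot_lt_le. apply Hlt'; auto. }
    intros Heps0.
    set (l := ln (1 / eps)).
    assert (Hinv : forall u, 0 < u -> eps < / u -> u < 1 / eps).
    { intros u Hu He. unfold Rdiv. rewrite Rmult_1_l. rewrite <- (Rinv_inv u).
      apply Rinv_lt_contravar; auto. apply Rmult_lt_0_compat; auto. apply Rinv_0_lt_compat; auto. }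
    assert (Hl1 : 1 < l).
    { assert (he : exp 1 < 1 / eps).
      { apply Hinv; [apply exp_pos|]. eapply Rlt_le_trans; [apply Heps0|apply Rmin_l]. }
      pose proof (ln_increasing _ _ (exp_pos 1) he) as hl. rewrite ln_exp in hl. exact hl. }
    assert (HlM : ln M < l).
    { unfold l. apply ln_increasing; [lra|]. apply Hinv; [lra|].
      eapply Rlt_le_trans; [apply Heps0|apply Rmin_r]. }
    assert (HM0 : 0 <= ln M).
    { destruct (Req_dec M 1) as [e|e]. rewrite e, ln_1; lra.
      rewrite <- ln_1. left. apply ln_increasing; lra. }
    assert (Hxe : ln (M / eps) = ln M + l).
    { unfold l. rewrite <- ln_mult by (try lra; apply Rdiv_lt_0_compat; lra). f_equal. field. lra. }
    assert (Hx0 : 0 <= x).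
    { unfold x. rewrite Hxe. apply Rmult_le_pos; [lra|]. left; apply Rinv_0_lt_compat; lra. }
    assert (Hk0b : INR k0 <= x + 1).
    { destruct (archimed x) as [U1 U2].
      assert (0 <= up x)%Z by (apply le_IZR; lra).
      unfold k0. rewrite INR_IZR_INZ, Z2Nat.id by auto. lra. }
    assert (Hxq : x <= 2 / ln 2 * l).
    { unfold x. rewrite Hxe. replace (2 / ln 2 * l) with ((2 * l) / ln 2) by (field; lra).
      apply Rmult_le_compat_r; [left; apply Rinv_0_lt_compat; lra| lra]. }
    assert (HK : INR (S ks) <= 2 / ln 2 * l + 2 * l).
    { rewrite S_INR. assert (INR ks <= INR k0) by (apply le_INR; auto). lra. }
    pose proof (pos_INR m) as Hm0.
    assert (Hml : INR m <= INR m * l) by nra.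
    split.
    + assert (0 <= INR m * l) by nra. nra.
    + rewrite mult_INR, !plus_INR. simpl (INR 1).
      assert (INR m + 1 + INR (S ks) <= (2 / ln 2 + 3 + INR m) * l) by nra.
      pose proof (pos_INR N).
      replace ((2 / ln 2 + 3 + INR m) * INR N * l) with (INR N * ((2 / ln 2 + 3 + INR m) * l)) by ring.
      apply Rmult_le_compat_l; lra.
Qed.
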